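(* Let $q,n,a,h,t$ be positive integers with $a\le q-1$, $h\le n$, $a\le t\le ah$, and suppose $t+1$ divides $q$. For $j\in\{0,1,\dots,t\}$ let $$\mathcal C_q^{(j)}(n;t)=\Big\{\mathbf x\in[q]^n:\ \sum_{i=1}^n x_i\equiv j\pmod{t+1}\Big\}.$$ Then for every $j\in\{0,1,\dots,t\}$, $\mathcal C_q^{(j)}(n;t)$ is an optimal $(a,h,t)^\circ$-AED code in $[q]^n$, i.e., it is $(a,h,t)^\circ$-AED and no $(a,h,t)^\circ$-AED code in $[q]^n$ has larger cardinality (its cardinality being $\frac{q^n}{t+1}$).
   Context: $[q]=\{0,1,\dots,q-1\}$ and $+_q$ denotes coordinatewise addition modulo $q$. Cyclic asymmetric channel: an input $\mathbf x\in[q]^n$ can produce any output $\mathbf y=\mathbf x+_q\mathbf f$, where $\mathbf f\in[q]^n$ satisfies (1) $0\le f_i\le a$ for all $i$; (2) $\sum_{i=1}^n\mathbb 1_{\{f_i\ne0\}}\le h$; (3) $\sum_{i=1}^n f_i\le t$. These are called $(a,h,t)^\circ$-asymmetric errors; $\mathrm{Out}^\circ(\mathbf x)$ denotes the set of all such outputs. A code $\mathcal C\subseteq[q]^n$ is $(a,h,t)^\circ$-AED if for all $\mathbf x\in\mathcal C$ and $\mathbf y\in\mathrm{Out}^\circ(\mathbf x)$ with $\mathbf y\ne\mathbf x$, we have $\mathbf y\notin\mathcal C$. *)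

(* Defs.v *)
From mathcomp Require Import all_boot.
Set Implicit Arguments. Unset Strict Implicit. Unset Printing Implicit Defensive.

Definition word (q n : nat) := (n.-tuple 'I_q).

Definition cyc_out (q n a h t : nat) (x y : word q n) : Prop :=
  exists f : n.-tuple nat,
    [/\ forall i : 'I_n, tnth f i <= a,
        count (fun v => v != 0) f <= h,
        sumn f <= t
      & forall i : 'I_n, (val (tnth y i) = (val (tnth x i) + tnth f i) %% q)].

Definition cyc_AED (q n a h t : nat) (C : {set word q n}) : Prop :=
  forall x y : word q n, x \in C -> cyc_out a h t x y -> y != x -> y \notin C.

Definition sum_code (q n t j : nat) : {set word q n} :=
  [set x : word q n | (\sum_(i < n) val (tnth x i)) == j %[mod t.+1]].

Definition optimal_AED (q n a h t : nat) (C : {set word q n}) : Prop :=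
  cyc_AED a h t C /\
  forall C' : {set word q n}, cyc_AED a h t C' -> #|C'| <= #|C|.

(* Main.v *)
Require Import Defs.
From mathcomp Require Import all_boot.
From mathcomp Require Import zify.
Set Implicit Arguments. Unset Strict Implicit.

Lemma sum_min (a k m : nat) : \sum_(i < m) minn a (k - a * i) = minn k (a * m).
Proof.
elim: m => [|m IH]; first by rewrite big_ord0 muln0 minn0.
rewrite big_ord_recr /= IH.
case: (leqP k (a * m)) => H.
- have -> : k - a * m = 0 by apply/eqP; rewrite subn_eq0.
  rewrite minn0 addn0; lia.
- lia.
Qed.

Lemma count_lt (h m n : nat) : count (fun i => i < h) (iota m n) <= h - m.
Proof.
elim: n m => [|n IH] m //=.
have := IH m.+1; case: ltnP => /= H; lia.
Qed.

Lemma sumn_tup n (f : n.-tuple nat) : sumn f = \sum_(i < n) tnth f i.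
Proof. by rewrite sumnE big_tuple. Qed.

Lemma count_mktuple n (p : pred nat) (G : nat -> nat) :
  count p [tuple G (val i) | i < n] = count (fun i => p (G i)) (iota 0 n).
Proof.
by rewrite /= -val_enum_ord count_map count_map.
Qed.
Definition addw q n (x : word q n) (d : nat -> nat) : word q n :=
  [tuple insubd (tnth x i) ((val (tnth x i) + d (val i)) %% q) | i < n].

Lemma val_addw q n (x : word q n) d i : 0 < q ->
  val (tnth (addw x d) i) = (val (tnth x i) + d (val i)) %% q.
Proof. by move=> Hq; rewrite tnth_mktuple val_insubd ltn_pmod. Qed.

Definition vv a k i := minn a (k - a * i).

Lemma shift_out q n a h t (x x' : word q n) (k l : nat) :
  0 < q -> 0 < a -> a < q -> l <= k -> k <= t -> k <= a * h -> h <= n ->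
  (forall i : 'I_n, (val (tnth x i) + vv a k i) %% q = (val (tnth x' i) + vv a l i) %% q) ->
  cyc_out a h t x x' /\
  (sumn [tuple vv a k (val i) - vv a l (val i) | i < n] = k - l) /\
  [tuple vv a k (val i) - vv a l (val i) | i < n] =
     [tuple vv a k (val i) - vv a l (val i) | i < n].
Proof.
move=> Hq Ha Haq Hlk Hkt Hkh Hhn E.
have Hmono : forall i, vv a l i <= vv a k i.
  by move=> i; rewrite /vv; lia.
have Han : a * h <= a * n by rewrite leq_mul2l Hhn orbT.
have Hsum : sumn [tuple vv a k (val i) - vv a l (val i) | i < n] = k - l.
  rewrite sumn_tup.
  have S1 : \sum_(i < n) vv a k i = k by rewrite /vv sum_min; lia.
  have S2 : \sum_(i < n) vv a l i = l by rewrite /vv sum_min; lia.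
  have : \sum_(i < n) tnth [tuple vv a k (val i) - vv a l (val i) | i < n] i
         + \sum_(i < n) vv a l i = \sum_(i < n) vv a k i.
    rewrite -big_split /=; apply: eq_bigr => i _.
    by rewrite tnth_mktuple subnK.
  rewrite S1 S2; lia.
split; last by split.
exists [tuple vv a k (val i) - vv a l (val i) | i < n]; split.
- by move=> i; rewrite tnth_mktuple /vv; lia.
- rewrite (count_mktuple n (fun v => v != 0) (fun j => vv a k j - vv a l j)).
  have := count_lt h 0 n; rewrite subn0; apply: leq_trans.
  apply: sub_count => i /=; rewrite /vv.
  case: ltnP => // Hi.
  have : a * h <= a * i by rewrite leq_mul2l Hi orbT.
  lia.
- by rewrite Hsum; lia.
- move=> i; rewrite tnth_mktuple.
  have H := E i.
  rewrite -(subnK (Hmono i)) addnA in H.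
  move/eqP: H; rewrite eqn_modDr => /eqP ->.
  by rewrite modn_small //; apply: ltn_ord.
Qed.

Lemma sum_vv a n k : k <= a * n -> \sum_(i < n) vv a k i = k.
Proof. by move=> H; rewrite /vv sum_min; lia. Qed.

Lemma half q n a h t (C : {set word q n}) (x x' : word q n) (k l : nat) :
  0 < q -> 0 < a -> a < q -> l <= k -> k <= t -> t <= a * h -> h <= n ->
  cyc_AED a h t C -> x \in C -> x' \in C ->
  addw x (vv a k) = addw x' (vv a l) -> x = x' /\ k = l.
Proof.
move=> Hq Ha Haq Hlk Hkt Hth Hhn Haed Hx Hx' Heq.
have E : forall i : 'I_n, (val (tnth x i) + vv a k i) %% q = (val (tnth x' i) + vv a l i) %% q.
  by move=> i; rewrite -!val_addw // Heq.
have [Hout _] := shift_out Hq Ha Haq Hlk Hkt (leq_trans Hkt Hth) Hhn E.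
have Exx : x' = x.
  apply/eqP; case: eqP => // /eqP Hne.
  by have := Haed x x' Hx Hout Hne; rewrite Hx'.
subst x'; split => //.
have Han : a * h <= a * n by rewrite leq_mul2l Hhn orbT.
rewrite -(@sum_vv a n k); last by lia.
rewrite -(@sum_vv a n l); last by lia.
apply: eq_bigr => i _.
have := E i; move/eqP; rewrite eqn_modDl => /eqP.
rewrite !modn_small //; rewrite /vv; lia.
Qed.

Lemma aed_bound q n a h t (C : {set word q n}) :
  0 < q -> 0 < a -> a < q -> t <= a * h -> h <= n -> cyc_AED a h t C ->
  #|C| * t.+1 <= q ^ n.
Proof.
move=> Hq Ha Haq Hth Hhn Haed.
pose Phi := fun p : word q n * 'I_t.+1 => addw p.1 (vv a p.2).
have inj : {in setX C setT &, injective Phi}.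
  move=> [x k] [x' l] /setXP [Hx _] /setXP [Hx' _] /= E.
  have Hk := ltn_ord k; have Hl := ltn_ord l.
  case: (leqP l k) => Hlk.
  - have [-> Ekl] := half Hq Ha Haq Hlk (Hk : k <= t) Hth Hhn Haed Hx Hx' E.
    by congr pair; apply: val_inj.
  - have [-> Ekl] := half Hq Ha Haq (ltnW Hlk) (Hl : l <= t) Hth Hhn Haed Hx' Hx (esym E).
    by congr pair; apply: val_inj.
have := max_card (mem (Phi @: setX C setT)).
rewrite card_in_imset // cardsX cardsT card_ord card_tuple card_ord.
by [].
Qed.

Lemma code_aed q n a h t j : 0 < q -> t.+1 %| q -> cyc_AED a h t (sum_code q n t j).
Proof.
move=> Hq Hd x y Hx [f [Hfa Hcnt Hsum Hy]] Hne; apply/negP => Hyc.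
rewrite /sum_code !inE in Hx Hyc.
have Ey : \sum_(i < n) val (tnth y i) = \sum_(i < n) val (tnth x i) + sumn f %[mod t.+1].
  rewrite (eq_bigr _ (fun i _ => Hy i)).
  have -> : \sum_(i < n) val (tnth x i) + sumn f = \sum_(i < n) (val (tnth x i) + tnth f i).
    by rewrite big_split /= sumn_tup.
  rewrite -[LHS]modn_summ -[RHS]modn_summ; congr (_ %% _); apply: eq_bigr => i _.
  by rewrite modn_dvdm.
have F0 : sumn f = 0.
  move/eqP: Hx => Hx; move/eqP: Hyc => Hyc.
  have : (\sum_(i < n) val (tnth x i) + sumn f) %% t.+1 = (\sum_(i < n) val (tnth x i) + 0) %% t.+1.
    by rewrite -Ey Hyc addn0 Hx.
  move/eqP; rewrite eqn_modDl mod0n => /eqP; rewrite modn_small //; lia.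
have f0 : forall i, tnth f i = 0.
  move=> i; move/eqP: F0; rewrite sumn_tup sum_nat_eq0 => /forallP /(_ i) /eqP //.
apply: (negP Hne); apply/eqP; apply: eq_from_tnth => i; apply: val_inj.
by rewrite Hy f0 addn0 modn_small //; apply: ltn_ord.
Qed.

Lemma card_parts q n t : \sum_(j < t.+1) #|sum_code q n t j| = q ^ n.
Proof.
have -> : q ^ n = \sum_(x : word q n) 1.
  by rewrite sum_nat_const card_tuple card_ord muln1.
have -> : \sum_(j < t.+1) #|sum_code q n t j| =
    \sum_(j < t.+1) \sum_(x : word q n) (x \in sum_code q n t j : nat).
  apply: eq_bigr => j _; rewrite -sum1_card big_mkcond /=.
  by apply: eq_bigr => x _; case: (x \in _).
rewrite exchange_big /=; apply: eq_bigr => x _.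
set S := \sum_(i < n) val (tnth x i).
have Hlt : S %% t.+1 < t.+1 by rewrite ltn_mod.
rewrite (bigD1 (Ordinal Hlt)) //= big1.
  by rewrite /sum_code inE /= modn_mod eqxx.
move=> j Hj; rewrite /sum_code inE /= (modn_small (ltn_ord j)).
case: eqP => // Ej; move: Hj.
have -> : j = Ordinal Hlt by apply: val_inj; rewrite /= -Ej.
by rewrite eqxx.
Qed.

Theorem theorem6 (q n a h t : nat) :
  0 < q -> 0 < n -> 0 < a -> 0 < h -> 0 < t ->
  a <= q - 1 -> h <= n -> a <= t -> t <= a * h ->
  t.+1 %| q ->
  forall j : nat, j <= t ->
    optimal_AED a h t (sum_code q n t j) /\
    #|sum_code q n t j| = q ^ n %/ t.+1.
Proof.
move=> Hq Hn Ha Hh Ht Haq Hhn Hat Hth Hd j Hj.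
have Haq' : a < q by lia.
have Hbound : forall C : {set word q n}, cyc_AED a h t C -> #|C| <= q ^ n %/ t.+1.
  by move=> C HC; rewrite leq_divRL // (aed_bound Hq Ha Haq' Hth Hhn HC).
have Hdn : t.+1 %| q ^ n by apply: dvdn_exp.
set M := q ^ n %/ t.+1.
have HqM : q ^ n = t.+1 * M by rewrite mulnC divnK.
have Heq : #|sum_code q n t j| = M.
  apply/eqP; rewrite eqn_leq (Hbound _ (@code_aed q n a h t j Hq Hd)) /=.
  rewrite leqNgt; apply/negP => Hlt.
  have := card_parts q n t.
  rewrite (bigD1 (Ordinal (Hj : j < t.+1))) //=.
  have Hr : \sum_(i < t.+1 | i != Ordinal (Hj : j < t.+1)) #|sum_code q n t i|
            <= \sum_(i < t.+1 | i != Ordinal (Hj : j < t.+1)) M.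
    by apply: leq_sum => i _; apply: Hbound; by apply: code_aed.
  rewrite sum_nat_const cardC1 card_ord /= in Hr.
  move=> E; rewrite HqM mulSn in E.
  move: Hr E Hlt; clearbody M; move: (\sum_(i < t.+1 | _) _) => R; lia.
split => //; split; first by apply: code_aed.
by move=> C' HC'; rewrite Heq; apply: Hbound.
Qed.
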